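(* Assume $\mu_Z\ge\eta$ and $\rho>\rho_0$. Then for every $z\ge0$ and $m\ge\beta^{1/(p-1)}$, the function $y\mapsto\hat v(y,z,m)$ on $[y^*(m),\beta]$ is continuous, strictly convex and decreasing.
   Context: Parameters: $\mu\in\mathbb R^d$, invertible $\sigma\in\mathbb R^{d\times d}$, $\mu_Z\in\mathbb R$, $\sigma_Z\ge0$, $\gamma\in\mathbb R^d$ with $|\gamma|=1$, $\rho>0$, $\beta>0$, $\lambda\in[0,1]$, $p<1$, $p\ne0$. Constants: $\alpha=\frac12\mu^\top(\sigma\sigma^\top)^{-1}\mu$, $\eta=\sigma_Z\gamma^\top\sigma^{-1}\mu$, $\kappa=\frac{-(\rho-\eta-\alpha)+\sqrt{(\rho-\eta-\alpha)^2+4\alpha(\rho-\mu_Z)}}{2\alpha}$, and $\rho_0=\max\{\mu_Z,2\alpha,\alpha p/(1-p)\}$ if $p\in(0,1)$, $\rho_0=\max\{\mu_Z,0\}$ if $p<0$. Free boundary. For $m\in[\beta^{1/(p-1)},\lambda^{-1}\beta^{1/(p-1)})$ (all $m\ge\beta^{1/(p-1)}$ if $\lambda=0$) put $y^*(m)=m^{p-1}$; for $\lambda>0$ and $m\ge\lambda^{-1}\beta^{1/(p-1)}$, $y^*(m)$ is the unique $y\in(0,m^{p-1}]$ solving \[ \tfrac{\beta m^{p-1}}{(\alpha+\rho)y}+\tfrac{\beta}{\alpha+\rho}\ln\tfrac{y}{\beta}+\tfrac{\rho}{(\alpha+\rho)^2}\beta^{-\rho/\alpha}y^{\frac{\alpha+\rho}{\alpha}}-\tfrac{m^{p-1}}{\alpha+\rho}\beta^{-\rho/\alpha}y^{\rho/\alpha}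 =\tfrac{\alpha\beta^{-\rho/\alpha}}{(\alpha+\rho)^2}\big(\lambda^{\frac{\alpha p-(1-p)\rho}{\alpha}}-1\big)m^{-\frac{(\alpha+\rho)(1-p)}{\alpha}}+\tfrac{\beta\lambda}{\alpha+\rho}\ln(\beta(\lambda m)^{1-p})-\tfrac{\beta}{\alpha+\rho}\ln(\beta m^{1-p})+\tfrac{\lambda\beta}{\alpha+\rho}-\tfrac{\alpha\beta}{(\alpha+\rho)^2}+\tfrac{(1-p)^2\beta(\lambda-1)}{p(\alpha+\rho)}-\tfrac{\beta(\alpha+\rho+p\alpha)(\lambda-1)}{p(\alpha+\rho)^2}+\tfrac{\beta(1-p)(\lambda-1)}{\alpha+\rho}. \] Coefficients (for $m\ge\beta^{1/(p-1)}$): $C_6(m)=\int_m^\infty\big(\frac{\alpha}{\rho(\alpha+\rho)}\ell^{p-1}\beta^{-\rho/\alpha}y^*(\ell)^{\rho/\alpha}-\frac{\alpha\beta}{(\alpha+\rho)^2}\beta^{-\frac{\alpha+\rho}{\alpha}}y^*(\ell)^{\frac{\alpha+\rho}{\alpha}}\big)d\ell$. With $A(m)=\frac{\alpha^2\beta^{-\rho/\alpha}}{(\alpha+\rho)^2(\rho(1-p)-\alpha p)}\big(\lambda^{\frac{\alpha p-(1-p)\rho}{\alpha}}-1\big)m^{\frac{\alpha p-(1-p)\rho}{\alpha}}$ (used only when $\lambda>0$) and $B(m)=\frac{\alpha^2\beta^{-\rho/\alpha}}{(\alpha+\rho)^2(\rho(1-p)-\alpha p)}m^{\frac{\alpha p-(1-p)\rho}{\alpha}}$: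 $C_1=A-\frac{\lambda\beta m}{\alpha+\rho}+\frac{\rho}{\alpha}C_6$; $C_2=\frac{\alpha}{\rho}A+C_6$; $C_4=-\frac{\alpha}{\rho}B+C_6$; for $\lambda>0$, $m\ge\lambda^{-1}\beta^{1/(p-1)}$: $C_3=A+\frac{\rho}{\alpha}C_6+\frac{\beta m}{\alpha+\rho}\big[\frac{(\alpha+\rho-p\rho-(1-p)^2(\alpha+\rho))\lambda}{p(\alpha+\rho)}-\lambda\ln(\beta(\lambda m)^{1-p})\big]$ and $C_5=\frac{\beta m}{\alpha+\rho}\big[-1+(1-\lambda)\frac{(1-p)^2(\alpha+\rho)-\alpha-\rho+p\rho}{p(\alpha+\rho)}-\lambda\ln(\beta(\lambda m)^{1-p})+\ln(\beta m^{1-p})\big]+A+\frac{\rho}{\alpha}C_6$; otherwise $C_3=-B+\frac{(1-p)^2\beta^{p/(p-1)}}{\rho(1-p)-\alpha p}+\frac{\rho}{\alpha}C_6$ and $C_5=-B+\frac{(1-p)^2\beta^{p/(p-1)}}{\rho(1-p)-\alpha p}+\frac{\rho}{\alpha}C_6+\frac{\beta m}{\alpha+\rho}\big[\frac{(1-p)^2}{p}-\frac{\alpha p+\alpha+\rho}{p(\alpha+\rho)}+\ln(\beta m^{1-p})\big]$. Dual function. For $z\ge0$, $m\ge\beta^{1/(p-1)}$, $y\in[y^*(m),\beta]$, with $\psi(y)=y-\frac{\beta^{1-\kappa}}{\kappa}y^\kappa$: $\hat v(y,z,m)=\frac1\beta C_1(m)y+\beta^{\rho/\alpha}C_2(m)y^{-\rho/\alpha}+\frac{(\lambda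 m)^p}{p\rho}+\frac{\lambda m}{\alpha+\rho}y\ln\frac y\beta+z\psi(y)$ if $(\lambda m)^{p-1}<y\le\beta$; $\hat v=\frac1\beta C_3(m)y+\beta^{\rho/\alpha}C_4(m)y^{-\rho/\alpha}+\frac{(1-p)^3}{p(\rho(1-p)-\alpha p)}y^{\frac{p}{p-1}}+z\psi(y)$ if $m^{p-1}<y\le(\lambda m)^{p-1}$; $\hat v=\frac1\beta C_5(m)y+\beta^{\rho/\alpha}C_6(m)y^{-\rho/\alpha}+\frac{m^p}{p\rho}+\frac{m}{\alpha+\rho}y\ln\frac y\beta+z\psi(y)$ if $y^*(m)\le y\le m^{p-1}$. *)

(* Defs.v *)
From Stdlib Require Import Reals ClassicalEpsilon.
From Coquelicot Require Import Coquelicot.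
From mathcomp Require Import all_boot all_algebra.
From mathcomp Require Import Rstruct.

Set Implicit Arguments.
Unset Strict Implicit.
Unset Printing Implicit Defensive.

Local Open Scope R_scope.

(* real power with real exponent (bases are always > 0 where used) *)
Definition rpow (x a : R) : R := Rpower x a.

Definition alphaC (d : nat) (mu : 'cV[R]_d) (sigma : 'M[R]_d) : R :=
  (1/2) * ((mu^T *m invmx (sigma *m sigma^T) *m mu) ord0 ord0)%R.

Definition etaC (d : nat) (mu : 'cV[R]_d) (sigma : 'M[R]_d) (sigmaZ : R)
  (gamma : 'cV[R]_d) : R :=
  sigmaZ * ((gamma^T *m invmx sigma *m mu) ord0 ord0)%R.

Definition norm2 (d : nat) (v : 'cV[R]_d) : R := ((v^T *m v) ord0 ord0)%R.

Definition kappaC (alpha eta rho muZ : R) : R :=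
  (- (rho - eta - alpha)
   + sqrt ((rho - eta - alpha)^2 + 4 * alpha * (rho - muZ))) / (2 * alpha).

Definition rho0C (alpha muZ p : R) : R :=
  if Rlt_dec 0 p then Rmax muZ (Rmax (2 * alpha) (alpha * p / (1 - p)))
  else Rmax muZ 0.

(* free boundary equation: LHS(m,y) = RHS(m) *)
Definition fb_lhs (alpha rho beta p m y : R) : R :=
  beta * rpow m (p - 1) / ((alpha + rho) * y)
  + beta / (alpha + rho) * ln (y / beta)
  + rho / (alpha + rho)^2 * rpow beta (- rho / alpha) * rpow y ((alpha + rho) / alpha)
  - rpow m (p - 1) / (alpha + rho) * rpow beta (- rho / alpha) * rpow y (rho / alpha).

Definition fb_rhs (alpha rho beta lam p m : R) : R :=
  alpha * rpow beta (- rho / alpha) / (alpha + rho)^2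
    * (rpow lam ((alpha * p - (1 - p) * rho) / alpha) - 1)
    * rpow m (- ((alpha + rho) * (1 - p)) / alpha)
  + beta * lam / (alpha + rho) * ln (beta * rpow (lam * m) (1 - p))
  - beta / (alpha + rho) * ln (beta * rpow m (1 - p))
  + lam * beta / (alpha + rho)
  - alpha * beta / (alpha + rho)^2
  + (1 - p)^2 * beta * (lam - 1) / (p * (alpha + rho))
  - beta * (alpha + rho + p * alpha) * (lam - 1) / (p * (alpha + rho)^2)
  + beta * (1 - p) * (lam - 1) / (alpha + rho).

Definition upper_region (beta lam p m : R) : Prop :=
  0 < lam /\ / lam * rpow beta (1 / (p - 1)) <= m.

Definition upper_region_dec (beta lam p m : R) :
  {upper_region beta lam p m} + {~ upper_region beta lam p m}.
Proof.
unfold upper_region.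
destruct (Rlt_dec 0 lam) as [H1|H1];
  [destruct (Rle_dec (/ lam * rpow beta (1 / (p - 1))) m) as [H2|H2]|].
- left; split; assumption.
- right; intros [_ H]; contradiction.
- right; intros [H _]; contradiction.
Defined.

Definition ystar (alpha rho beta lam p m : R) : R :=
  if upper_region_dec beta lam p m then
    epsilon (inhabits 0) (fun y => 0 < y <= rpow m (p - 1)
                     /\ fb_lhs alpha rho beta p m y = fb_rhs alpha rho beta lam p m)
  else rpow m (p - 1).

Definition C6 (alpha rho beta lam p m : R) : R :=
  RInt_gen (fun l : R =>
      alpha / (rho * (alpha + rho)) * rpow l (p - 1) * rpow beta (- rho / alpha)
        * rpow (ystar alpha rho beta lam p l) (rho / alpha)
      - alpha * beta / (alpha + rho)^2 * rpow beta (- (alpha + rho) / alpha)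
        * rpow (ystar alpha rho beta lam p l) ((alpha + rho) / alpha))
    (at_point m) (Rbar_locally p_infty).

Definition expoE (alpha rho p : R) : R := (alpha * p - (1 - p) * rho) / alpha.

Definition Acoef (alpha rho beta lam p m : R) : R :=
  alpha^2 * rpow beta (- rho / alpha)
    / ((alpha + rho)^2 * (rho * (1 - p) - alpha * p))
    * (rpow lam (expoE alpha rho p) - 1) * rpow m (expoE alpha rho p).

Definition Bcoef (alpha rho beta p m : R) : R :=
  alpha^2 * rpow beta (- rho / alpha)
    / ((alpha + rho)^2 * (rho * (1 - p) - alpha * p))
    * rpow m (expoE alpha rho p).

Definition C1 (alpha rho beta lam p m : R) : R :=
  Acoef alpha rho beta lam p m - lam * beta * m / (alpha + rho)
  + rho / alpha * C6 alpha rho beta lam p m.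

Definition C2 (alpha rho beta lam p m : R) : R :=
  alpha / rho * Acoef alpha rho beta lam p m + C6 alpha rho beta lam p m.

Definition C4 (alpha rho beta lam p m : R) : R :=
  - (alpha / rho) * Bcoef alpha rho beta p m + C6 alpha rho beta lam p m.

Definition C3 (alpha rho beta lam p m : R) : R :=
  if upper_region_dec beta lam p m then
    Acoef alpha rho beta lam p m + rho / alpha * C6 alpha rho beta lam p m
    + beta * m / (alpha + rho)
      * ((alpha + rho - p * rho - (1 - p)^2 * (alpha + rho)) * lam / (p * (alpha + rho))
         - lam * ln (beta * rpow (lam * m) (1 - p)))
  else
    - Bcoef alpha rho beta p m
    + (1 - p)^2 * rpow beta (p / (p - 1)) / (rho * (1 - p) - alpha * p)
    + rho / alpha * C6 alpha rho beta lam p m.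

Definition C5 (alpha rho beta lam p m : R) : R :=
  if upper_region_dec beta lam p m then
    beta * m / (alpha + rho)
      * (-1 + (1 - lam) * ((1 - p)^2 * (alpha + rho) - alpha - rho + p * rho)
                          / (p * (alpha + rho))
         - lam * ln (beta * rpow (lam * m) (1 - p)) + ln (beta * rpow m (1 - p)))
    + Acoef alpha rho beta lam p m + rho / alpha * C6 alpha rho beta lam p m
  else
    - Bcoef alpha rho beta p m
    + (1 - p)^2 * rpow beta (p / (p - 1)) / (rho * (1 - p) - alpha * p)
    + rho / alpha * C6 alpha rho beta lam p m
    + beta * m / (alpha + rho)
      * ((1 - p)^2 / p - (alpha * p + alpha + rho) / (p * (alpha + rho))
         + ln (beta * rpow m (1 - p))).

Definition psiC (beta kappa y : R) : R :=
  y - rpow beta (1 - kappa) / kappa * rpow y kappa.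

(* The first branch is the region
   (lambda m)^{p-1} < y (empty when lambda = 0, where (lambda m)^{p-1} = +oo);
   the second is m^{p-1} < y <= (lambda m)^{p-1}; the third y <= m^{p-1}. *)
Definition vhat (alpha rho beta lam p kappa y z m : R) : R :=
  if Rlt_dec 0 lam then
  if Rlt_dec (rpow (lam * m) (p - 1)) y then
    C1 alpha rho beta lam p m / beta * y
    + rpow beta (rho / alpha) * C2 alpha rho beta lam p m * rpow y (- rho / alpha)
    + rpow (lam * m) p / (p * rho)
    + lam * m / (alpha + rho) * y * ln (y / beta)
    + z * psiC beta kappa y
  else if Rlt_dec (rpow m (p - 1)) y then
    C3 alpha rho beta lam p m / beta * y
    + rpow beta (rho / alpha) * C4 alpha rho beta lam p m * rpow y (- rho / alpha)
    + (1 - p)^3 / (p * (rho * (1 - p) - alpha * p)) * rpow y (p / (p - 1))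
    + z * psiC beta kappa y
  else
    C5 alpha rho beta lam p m / beta * y
    + rpow beta (rho / alpha) * C6 alpha rho beta lam p m * rpow y (- rho / alpha)
    + rpow m p / (p * rho)
    + m / (alpha + rho) * y * ln (y / beta)
    + z * psiC beta kappa y
  else if Rlt_dec (rpow m (p - 1)) y then
    C3 alpha rho beta lam p m / beta * y
    + rpow beta (rho / alpha) * C4 alpha rho beta lam p m * rpow y (- rho / alpha)
    + (1 - p)^3 / (p * (rho * (1 - p) - alpha * p)) * rpow y (p / (p - 1))
    + z * psiC beta kappa y
  else
    C5 alpha rho beta lam p m / beta * y
    + rpow beta (rho / alpha) * C6 alpha rho beta lam p m * rpow y (- rho / alpha)
    + rpow m p / (p * rho)
    + m / (alpha + rho) * y * ln (y / beta)
    + z * psiC beta kappa y.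

Definition continuous_on_Icc (f : R -> R) (a b : R) : Prop :=
  forall x, a <= x <= b ->
    filterlim f (within (fun y => a <= y <= b) (locally x)) (locally (f x)).

Definition strictly_convex_on_Icc (f : R -> R) (a b : R) : Prop :=
  forall x y t, a <= x <= b -> a <= y <= b -> x <> y -> 0 < t < 1 ->
    f (t * x + (1 - t) * y) < t * f x + (1 - t) * f y.

(* decreasing (non-increasing; for a strictly convex function this is
   equivalent to strict decrease) *)
Definition decreasing_on_Icc (f : R -> R) (a b : R) : Prop :=
  forall x y, a <= x -> x <= y -> y <= b -> f y <= f x.

(* Main.v *)
Require Import Defs.
From Stdlib Require Import Reals Lra Psatz Ranalysis5 ClassicalEpsilon Classical.
From Coquelicot Require Import Coquelicot.
From mathcomp Require Import all_boot all_algebra.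
From mathcomp Require Import Rstruct.

Local Open Scope R_scope.


Lemma alpha_pos (d : nat) (mu : 'cV[R]_d) (sigma : 'M[R]_d) :
  sigma \in unitmx -> mu != 0%R -> 0 < alphaC mu sigma.
Proof.
move=> Hs Hmu. Open Scope ring_scope.
rewrite /alphaC.
set v := invmx sigma *m mu.
have Hmu' : mu = sigma *m v by rewrite /v mulKVmx.
set X := invmx (sigma *m sigma^T).
have HN : sigma *m sigma^T \in unitmx.
  by rewrite unitmx_mul Hs unitmx_tr Hs.
have HX : sigma^T *m X *m sigma = 1%:M.
  rewrite -[LHS](mulKmx Hs) (mulmxA sigma (sigma^T *m X)) (mulmxA sigma sigma^T) /X mulmxV // mul1mx mulVmx //.
have Hq : (mu^T *m X *m mu) = v^T *m v.
  by rewrite Hmu' trmx_mul -!mulmxA (mulmxA sigma^T) (mulmxA (sigma^T *m X)) HX mul1mx.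
rewrite Hq.
have Hv : v != 0%R.
  apply/eqP => Hv0; move/eqP: Hmu; apply; by rewrite Hmu' Hv0 mulmx0.
have Hpos : (0 < (v^T *m v) ord0 ord0)%R.
  rewrite mxE.
  have [i Hi] : exists i, v i ord0 != 0%R.
    case: (pickP (fun i => v i ord0 != 0%R)) => [i Hi|H]; first by exists i.
    case/eqP: Hv; apply/matrixP => a b; rewrite (ord1 b) [RHS]mxE.
    move: (H a) => /= Ha; exact/eqP/negbFE/Ha.
  rewrite (bigD1 i) //= mxE.
  apply: Num.Theory.ltr_pwDl.
    by rewrite -GRing.expr2 Num.Theory.exprn_even_gt0.
  apply: Num.Theory.sumr_ge0 => j _; rewrite mxE -GRing.expr2; exact: Num.Theory.sqr_ge0.
move/RltP: Hpos => Hpos. apply: Rmult_lt_0_compat; [lra| exact: Hpos].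
Qed.

Local Open Scope R_scope.


Lemma ex_derive_Rpower e y : 0 < y -> ex_derive (fun x => Rpower x e) y.
Proof. intros Hy. eexists. apply is_derive_Reals, derivable_pt_lim_power, Hy. Qed.

Lemma Derive_Rpower e y : 0 < y -> Derive (fun x => Rpower x e) y = e * Rpower y (e - 1).
Proof. intros Hy. apply is_derive_unique, is_derive_Reals, derivable_pt_lim_power, Hy. Qed.

Lemma mvt_strict (f df : R -> R) (a b : R) :
  a < b -> (forall x, a < x < b -> is_derive f x (df x)) ->
  (forall x, a <= x <= b -> continuity_pt f x) ->
  exists c, a < c < b /\ f b - f a = df c * (b - a).
Proof.
  intros Hab Hd Hc.
  assert (pr1 : forall c, a < c < b -> derivable_pt f c).
  { intros c Hc'. exists (df c). apply is_derive_Reals, Hd, Hc'. }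
  assert (pr2 : forall c, a < c < b -> derivable_pt (fun t => t) c).
  { intros c _. apply derivable_pt_id. }
  destruct (MVT f (fun t => t) a b pr1 pr2 Hab Hc) as [c [P HP]].
  { intros c _. apply derivable_continuous_pt, derivable_pt_id. }
  exists c; split; [exact P|].
  rewrite (derive_pt_eq_0 f c (df c) (pr1 c P)) in HP.
  2: apply is_derive_Reals, Hd, P.
  rewrite (derive_pt_eq_0 (fun t => t) c 1 (pr2 c P)) in HP.
  2: apply derivable_pt_lim_id.
  lra.
Qed.

Lemma main_props (f g : R -> R) (a b : R) :
  a <= b ->
  (forall x, a <= x <= b -> continuity_pt f x) ->
  (forall x, a < x < b -> is_derive f x (g x)) ->
  (forall x y, a < x -> x < y -> y <= b -> g x < g y) ->
  g b <= 0 ->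
  continuous_on_Icc f a b /\ strictly_convex_on_Icc f a b /\ decreasing_on_Icc f a b.
Proof.
  intros Hab Hc Hd Hm Hgb.
  split; [|split].
  - intros x Hx. eapply filterlim_filter_le_1.
    + apply filter_le_within.
    + apply continuity_pt_filterlim, Hc, Hx.
  - assert (K : forall x y t, a <= x -> x < y -> y <= b -> 0 < t < 1 ->
        f (t * x + (1 - t) * y) < t * f x + (1 - t) * f y).
    { intros x y t Hx Hxy Hy Ht.
      set (z := t * x + (1 - t) * y).
      assert (Hz1 : x < z) by (unfold z; nra).
      assert (Hz2 : z < y) by (unfold z; nra).
      destruct (mvt_strict f g x z Hz1) as [c1 [Hc1 E1]].
      { intros u Hu; apply Hd; lra. }
      { intros u Hu; apply Hc; lra. }
      destruct (mvt_strict f g z y Hz2) as [c2 [Hc2 E2]].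
      { intros u Hu; apply Hd; lra. }
      { intros u Hu; apply Hc; lra. }
      assert (Hg : g c1 < g c2) by (apply Hm; lra).
      assert (Ez1 : z - x = (1 - t) * (y - x)) by (unfold z; ring).
      assert (Ez2 : y - z = t * (y - x)) by (unfold z; ring).
      rewrite Ez1 in E1; rewrite Ez2 in E2.
      assert (P : 0 < t * (1 - t) * (y - x)) by (apply Rmult_lt_0_compat; nra).
      assert (t * (f z - f x) - (1 - t) * (f y - f z) < 0).
      { rewrite E1 E2.
        replace (t * (g c1 * ((1 - t) * (y - x))) - (1 - t) * (g c2 * (t * (y - x))))
          with ((t * (1 - t) * (y - x)) * (g c1 - g c2)) by ring.
        nra. }
      lra. }
    intros x y t Hx Hy Hxy Ht.
    destruct (Rlt_or_le x y) as [H|H].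
    + apply K; lra.
    + assert (y < x) by lra.
      replace (t * x + (1 - t) * y) with ((1 - t) * y + (1 - (1 - t)) * x) by ring.
      replace (t * f x + (1 - t) * f y) with ((1 - t) * f y + (1 - (1 - t)) * f x) by ring.
      apply K; lra.
  - intros x y Hx Hxy Hy.
    destruct (Req_dec x y) as [->|Hne]; [lra|].
    destruct (mvt_strict f g x y) as [c [Hc' E]];
      [lra| intros u Hu; apply Hd; lra | intros u Hu; apply Hc; lra |].
    assert (g c < g b) by (apply Hm; lra).
    nra.
Qed.

Lemma incr_deriv (G G' : R -> R) (l r : R) :
  (forall y, l <= y <= r -> is_derive G y (G' y)) ->
  (forall y, l <= y <= r -> 0 < G' y) ->
  forall x y, l <= x -> x < y -> y <= r -> G x < G y.
Proof.
  intros Hd Hp x y Hx Hxy Hy.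
  destruct (mvt_strict G G' x y Hxy) as [c [Hc E]].
  { intros u Hu; apply Hd; lra. }
  { intros u Hu. apply continuity_pt_filterlim.
    apply (ex_derive_continuous G). eexists; apply Hd; lra. }
  assert (0 < G' c) by (apply Hp; lra). nra.
Qed.

Definition pw (c : R) (Q P : R -> R) (y : R) : R := if Rlt_dec c y then Q y else P y.

Lemma loc_lt x c : x < c -> locally x (fun y => y < c).
Proof. intros H. apply (locally_interval _ x m_infty c); simpl; auto. Qed.
Lemma loc_gt x c : c < x -> locally x (fun y => c < y).
Proof. intros H. apply (locally_interval _ x c p_infty); simpl; auto. Qed.

Lemma pw_cont c Q P x :
  continuity_pt P x -> continuity_pt Q x -> (x = c -> P c = Q c) ->
  continuity_pt (pw c Q P) x.
Proof.
  intros HP HQ He.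
  destruct (Rlt_dec x c) as [H|H]; [|destruct (Rlt_dec c x) as [H'|H']].
  - apply continuity_pt_ext_loc with P; [|exact HP].
    apply filter_imp with (2 := loc_lt x c H). intros y Hy. unfold pw.
    destruct (Rlt_dec c y); [lra|auto].
  - apply continuity_pt_ext_loc with Q; [|exact HQ].
    apply filter_imp with (2 := loc_gt x c H'). intros y Hy. unfold pw.
    destruct (Rlt_dec c y); [auto|lra].
  - assert (x = c) by lra. subst x. specialize (He (erefl c)).
    apply continuity_pt_locally. intros eps.
    apply continuity_pt_locally with (eps := eps) in HP.
    apply continuity_pt_locally with (eps := eps) in HQ.
    generalize (filter_and _ _ HP HQ). apply filter_imp.
    intros y [H1 H2]. unfold pw.
    destruct (Rlt_dec c c); [lra|].
    destruct (Rlt_dec c y); [rewrite He; exact H2|exact H1].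
Qed.

Lemma pw_derive c Q P x d :
  (x <= c -> is_derive P x d) -> (c <= x -> is_derive Q x d) -> (x = c -> P c = Q c) ->
  is_derive (pw c Q P) x d.
Proof.
  intros HP HQ He.
  destruct (Rlt_dec x c) as [H|H]; [|destruct (Rlt_dec c x) as [H'|H']].
  - apply is_derive_ext_loc with P; [|apply HP; lra].
    apply filter_imp with (2 := loc_lt x c H). intros y Hy. unfold pw.
    destruct (Rlt_dec c y); [lra|auto].
  - apply is_derive_ext_loc with Q; [|apply HQ; lra].
    apply filter_imp with (2 := loc_gt x c H'). intros y Hy. unfold pw.
    destruct (Rlt_dec c y); [auto|lra].
  - assert (x = c) by lra. subst x. specialize (He (erefl c)).
    assert (DP := HP (Rle_refl c)). assert (DQ := HQ (Rle_refl c)).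
    apply is_derive_Reals in DP. apply is_derive_Reals in DQ. apply is_derive_Reals.
    intros eps Heps.
    destruct (DP eps Heps) as [d1 H1]. destruct (DQ eps Heps) as [d2 H2].
    assert (Hd : 0 < Rmin d1 d2) by (apply Rmin_pos; [apply d1|apply d2]).
    exists (mkposreal _ Hd). intros h Hh Hhd. simpl in Hhd.
    unfold pw. destruct (Rlt_dec c c); [lra|].
    destruct (Rlt_dec c (c + h)).
    + rewrite He. apply H2; auto. apply Rlt_le_trans with (1 := Hhd), Rmin_r.
    + apply H1; auto. apply Rlt_le_trans with (1 := Hhd), Rmin_l.
Qed.

Lemma pw_mono l r c Q P :
  (forall x y, l < x -> x < y -> y <= r -> y <= c -> P x < P y) ->
  (forall x y, c <= x -> x < y -> y <= r -> l < x -> Q x < Q y) ->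
  (l < c -> c < r -> P c = Q c) ->
  forall x y, l < x -> x < y -> y <= r -> pw c Q P x < pw c Q P y.
Proof.
  intros HP HQ He x y Hx Hxy Hy. unfold pw.
  destruct (Rlt_dec c x); destruct (Rlt_dec c y); try lra.
  - apply HQ; lra.
  - destruct (Req_dec x c) as [->|Hne].
    + rewrite (He ltac:(lra) ltac:(lra)). apply HQ; lra.
    + apply Rlt_trans with (P c). apply HP; lra. rewrite (He ltac:(lra) ltac:(lra)). apply HQ; lra.
  - apply HP; lra.
Qed.

Definition props (f : R -> R) (a b : R) : Prop :=
  continuous_on_Icc f a b /\ strictly_convex_on_Icc f a b /\ decreasing_on_Icc f a b.

Lemma props_ext f g a b : (forall y, a <= y <= b -> f y = g y) -> props g a b -> props f a b.
Proof.
  intros He [Hc [Hs Hd]]. split; [|split].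
  - intros x Hx. rewrite (He x Hx). intros P HP.
    specialize (Hc x Hx P HP). unfold filtermap, within in *.
    apply filter_imp with (2 := Hc). intros y Hy Dy. rewrite (He y Dy). auto.
  - intros x y t Hx Hy Hxy Ht. rewrite !He; auto.
    destruct Hx, Hy; split; nra.
  - intros x y Hx Hxy Hy. rewrite !He; try lra. auto.
Qed.

Lemma pw3_props (F1 F2 F3 G1 G2 G3 : R -> R) (u w a b : R) :
  0 < a -> a <= u -> u <= w -> w <= b ->
  (forall y, 0 < y -> is_derive F1 y (G1 y)) ->
  (forall y, 0 < y -> is_derive F2 y (G2 y)) ->
  (forall y, 0 < y -> is_derive F3 y (G3 y)) ->
  F3 u = F2 u -> G3 u = G2 u -> F2 w = F1 w -> G2 w = G1 w ->
  (forall x y, 0 < x -> x < y -> y <= u -> G3 x < G3 y) ->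
  (forall x y, u <= x -> x < y -> y <= w -> G2 x < G2 y) ->
  (forall x y, w <= x -> x < y -> y <= b -> G1 x < G1 y) ->
  G1 b <= 0 ->
  props (pw w F1 (pw u F2 F3)) a b.
Proof.
  intros Ha Hau Huw Hwb D1 D2 D3 Vu Du Vw Dw M3 M2 M1 Gb.
  set (g := pw w G1 (pw u G2 G3)).
  assert (Fw : pw u F2 F3 w = F1 w).
  { unfold pw. destruct (Rlt_dec u w); [auto|]. assert (u = w) by lra. subst. simpl. congruence. }
  assert (Gw : pw u G2 G3 w = G1 w).
  { unfold pw. destruct (Rlt_dec u w); [auto|]. assert (u = w) by lra. subst. simpl. congruence. }
  assert (Cont : forall y, 0 < y -> continuity_pt F1 y /\ continuity_pt F2 y /\ continuity_pt F3 y).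
  { intros y Hy. repeat split; apply continuity_pt_filterlim; apply: ex_derive_continuous;
    eexists; [apply D1|apply D2|apply D3]; auto. }
  apply main_props with g.
  - lra.
  - intros x Hx. destruct (Cont x ltac:(lra)) as [C1 [C2 C3]].
    apply pw_cont; [apply pw_cont; [exact C3|exact C2|intros _; exact Vu] | exact C1 | intros _; exact Fw].
  - intros x Hx. unfold g. apply pw_derive.
    + intros Hxw. replace (pw w G1 (pw u G2 G3) x) with (pw u G2 G3 x)
        by (unfold pw; destruct (Rlt_dec w x); [lra|auto]).
      apply pw_derive.
      * intros Hxu. unfold pw. destruct (Rlt_dec u x); [lra|]. apply D3; lra.
      * intros Hux. unfold pw. destruct (Rlt_dec u x); [apply D2; lra|].
        assert (x = u) by lra. subst x. rewrite Du. apply D2; lra.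
      * intros ->. auto.
    + intros Hwx. unfold pw at 1. destruct (Rlt_dec w x); [apply D1; lra|].
      assert (x = w) by lra. subst x. rewrite Gw. apply D1; lra.
    + intros ->. auto.
  - unfold g. apply (pw_mono a b w G1 (pw u G2 G3)).
    + intros x y Hx Hxy Hy Hyw. apply (pw_mono a w u G2 G3); [ | | | exact Hx | exact Hxy | exact Hyw].
      * intros x' y' Hx' Hxy' Hy' Hyu. apply M3; lra.
      * intros x' y' Hx' Hxy' Hy' Hl. apply M2; lra.
      * intros _ _. exact Du.
    + intros x y Hx Hxy Hy Hl. apply M1; lra.
    + intros _ _. exact Gw.
  - unfold g, pw at 1. destruct (Rlt_dec w b); [auto|].
    assert (w = b) by lra. subst. rewrite Gw. auto.
Qed.

Local Open Scope R_scope.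


Definition Fg (e q b k z c1 c2 c0 c3 c4 : R) (y : R) : R :=
  c1 * y + c2 * rpow y e + c0 + c3 * (y * ln (y / b)) + c4 * rpow y q + z * psiC b k y.
Definition Gg (e q b k z c1 c2 c3 c4 : R) (y : R) : R :=
  c1 + c2 * (e * rpow y (e - 1)) + c3 * (ln (y / b) + 1) + c4 * (q * rpow y (q - 1))
  + z * (1 - rpow b (1 - k) / k * (k * rpow y (k - 1))).
Definition Hg (e q b k z c2 c3 c4 : R) (y : R) : R :=
  c2 * (e * ((e - 1) * rpow y (e - 1 - 1))) + c3 / y + c4 * (q * ((q - 1) * rpow y (q - 1 - 1)))
  + z * (- (rpow b (1 - k) / k * (k * ((k - 1) * rpow y (k - 1 - 1))))).

Lemma Fg_derive e q b k z c1 c2 c0 c3 c4 y : 0 < y -> 0 < b ->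
  is_derive (Fg e q b k z c1 c2 c0 c3 c4) y (Gg e q b k z c1 c2 c3 c4 y).
Proof.
  intros Hy Hb. unfold Fg, Gg, psiC, rpow.
  auto_derive.
  - repeat split; try apply ex_derive_Rpower; auto.
    apply Rmult_lt_0_compat; auto. apply Rinv_0_lt_compat; auto.
  - rewrite !Derive_Rpower; auto. unfold Rdiv. replace (y * (1 * / b * / (y * / b))) with 1 by (field; split; lra). ring.
Qed.

Lemma Gg_derive e q b k z c1 c2 c3 c4 y : 0 < y -> 0 < b ->
  is_derive (Gg e q b k z c1 c2 c3 c4) y (Hg e q b k z c2 c3 c4 y).
Proof.
  intros Hy Hb. unfold Gg, Hg, rpow.
  auto_derive.
  - repeat split; try apply ex_derive_Rpower; auto.
    apply Rmult_lt_0_compat; auto. apply Rinv_0_lt_compat; auto.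
  - rewrite !Derive_Rpower; auto. replace (1 * / b * / (y * / b)) with (/ y) by (field; split; lra). unfold Rdiv. ring.
Qed.

Lemma rpow_pos x e : 0 < rpow x e.
Proof. unfold rpow, Rpower. apply exp_pos. Qed.
Lemma rpow_rpow x a c : rpow (rpow x a) c = rpow x (a * c).
Proof. unfold rpow. apply Rpower_mult. Qed.
Lemma rpow_plus x a c : rpow x (a + c) = rpow x a * rpow x c.
Proof. unfold rpow. apply Rpower_plus. Qed.
Lemma rpow_prod x y e : 0 < x -> 0 < y -> rpow (x * y) e = rpow x e * rpow y e.
Proof. intros. unfold rpow, Rpower. rewrite ln_mult; auto. rewrite <- exp_plus. f_equal; ring. Qed.
Lemma ln_rpow x e : ln (rpow x e) = e * ln x.
Proof. unfold rpow. apply ln_Rpower. Qed.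
Lemma rpow_1 x : 0 < x -> rpow x 1 = x.
Proof. unfold rpow. apply Rpower_1. Qed.
Lemma rpow_eq x a c : a = c -> rpow x a = rpow x c.
Proof. intros ->; reflexivity. Qed.
Lemma rpow_opp x a : rpow x (- a) = / rpow x a.
Proof. unfold rpow. apply Rpower_Ropp. Qed.

Lemma rpow_split x a c : rpow x c = rpow x a * rpow x (c - a).
Proof. rewrite <- rpow_plus. apply rpow_eq. ring. Qed.

Definition U1 al r b l p m c6 := Acoef al r b l p m - l * b * m / (al + r) + r / al * c6.
Definition U2 al r b l p m c6 := al / r * Acoef al r b l p m + c6.
Definition U4 al r b p m c6 := - (al / r) * Bcoef al r b p m + c6.
Definition U3 al r b l p m c6 :=
  Acoef al r b l p m + r / al * c6
  + b * m / (al + r)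
    * ((al + r - p * r - (1 - p)^2 * (al + r)) * l / (p * (al + r))
       - l * ln (b * rpow (l * m) (1 - p))).
Definition U5 al r b l p m c6 :=
  b * m / (al + r)
    * (-1 + (1 - l) * ((1 - p)^2 * (al + r) - al - r + p * r) / (p * (al + r))
       - l * ln (b * rpow (l * m) (1 - p)) + ln (b * rpow m (1 - p)))
  + Acoef al r b l p m + r / al * c6.
Definition L3 al r b p m c6 :=
  - Bcoef al r b p m
  + (1 - p)^2 * rpow b (p / (p - 1)) / (r * (1 - p) - al * p)
  + r / al * c6.
Definition L5 al r b p m c6 :=
  L3 al r b p m c6
  + b * m / (al + r)
    * ((1 - p)^2 / p - (al * p + al + r) / (p * (al + r)) + ln (b * rpow m (1 - p))).
Definition Kc al r p := (1 - p)^3 / (p * (r * (1 - p) - al * p)).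

Section Pieces.
Variables (al r b l p m k z c6 : R).
Let e := - r / al.
Let q := p / (p - 1).
Definition PF1 := Fg e q b k z (U1 al r b l p m c6 / b) (rpow b (r / al) * U2 al r b l p m c6)
  (rpow (l * m) p / (p * r)) (l * m / (al + r)) 0.
Definition PG1 := Gg e q b k z (U1 al r b l p m c6 / b) (rpow b (r / al) * U2 al r b l p m c6)
  (l * m / (al + r)) 0.
Definition PH1 := Hg e q b k z (rpow b (r / al) * U2 al r b l p m c6) (l * m / (al + r)) 0.
Definition PF2 (c3 : R) := Fg e q b k z (c3 / b) (rpow b (r / al) * U4 al r b p m c6) 0 0 (Kc al r p).
Definition PG2 (c3 : R) := Gg e q b k z (c3 / b) (rpow b (r / al) * U4 al r b p m c6) 0 (Kc al r p).
Definition PH2 := Hg e q b k z (rpow b (r / al) * U4 al r b p m c6) 0 (Kc al r p).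
Definition PF3 (c5 : R) := Fg e q b k z (c5 / b) (rpow b (r / al) * c6) (rpow m p / (p * r)) (m / (al + r)) 0.
Definition PG3 (c5 : R) := Gg e q b k z (c5 / b) (rpow b (r / al) * c6) (m / (al + r)) 0.
Definition PH3 := Hg e q b k z (rpow b (r / al) * c6) (m / (al + r)) 0.
End Pieces.

Section Ids.
Variables (al r b l p m k z c6 : R).
Hypotheses (Hal : 0 < al) (Hr : 0 < r) (Hb : 0 < b) (Hl : 0 < l) (Hm : 0 < m)
  (Hp1 : p < 1) (Hp0 : p <> 0) (HD : 0 < r * (1 - p) - al * p) (Hk : k <> 0).
Let Hlm : 0 < l * m := Rmult_lt_0_compat _ _ Hl Hm.

Lemma rpow_lin x a c d : c = a + d -> rpow x c = rpow x a * rpow x d.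
Proof. intros ->. apply rpow_plus. Qed.

Lemma rpow_bneg : rpow b (- r / al) = / rpow b (r / al).
Proof. rewrite <- rpow_opp. apply rpow_eq. field. lra. Qed.

Lemma Hnz_rpow x e : rpow x e <> 0.
Proof. apply Rgt_not_eq, rpow_pos. Qed.

Lemma IVu : PF3 al r b p m k z c6 (U5 al r b l p m c6) (rpow m (p - 1))
          = PF2 al r b p m k z c6 (U3 al r b l p m c6) (rpow m (p - 1)).
Proof.
  unfold PF3, PF2, Fg, U5, U3, U4, Bcoef, Acoef, Kc.
  set (E := expoE al r p).
  rewrite !rpow_rpow.
  assert (H1 : ln (rpow m (p - 1) / b) = - ln (b * rpow m (1 - p))).
  { unfold Rdiv. rewrite !ln_mult; try apply rpow_pos; try apply Rinv_0_lt_compat; auto.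
    rewrite ln_Rinv; auto. rewrite !ln_rpow. ring. }
  rewrite H1.
  assert (H2 : rpow m ((p - 1) * (- r / al)) = rpow m p * / rpow m E).
  { rewrite -rpow_opp -rpow_plus. apply rpow_eq. unfold E, expoE. field. lra. }
  assert (H3 : rpow m ((p - 1) * (p / (p - 1))) = rpow m p).
  { apply rpow_eq. field. lra. }
  assert (H4 : rpow m (p - 1) = rpow m p * / m).
  { transitivity (rpow m p * / rpow m 1); [| rewrite rpow_1 //].
    rewrite -rpow_opp -rpow_plus. apply rpow_eq. ring. }
  rewrite H2 H3 H4 rpow_bneg.
  field.
  repeat split; try apply Hnz_rpow; try lra.
Qed.

Lemma ln_div_b y : 0 < y -> ln (y / b) = ln y - ln b.
Proof. intros Hy. unfold Rdiv. rewrite ln_mult ?ln_Rinv; try ring; try apply Rinv_0_lt_compat; auto. Qed.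

Lemma ln_b_rpow x c : 0 < x -> ln (b * rpow x c) = ln b + c * ln x.
Proof. intros Hx. rewrite ln_mult; try apply rpow_pos; auto. rewrite ln_rpow. ring. Qed.

Lemma IDu : PG3 al r b p m k z c6 (U5 al r b l p m c6) (rpow m (p - 1))
          = PG2 al r b p m k z c6 (U3 al r b l p m c6) (rpow m (p - 1)).
Proof.
  unfold PG3, PG2, Gg, U5, U3, U4, Bcoef, Acoef, Kc.
  set (E := expoE al r p).
  rewrite !rpow_rpow.
  rewrite ln_div_b; [|apply rpow_pos]. rewrite !ln_rpow !ln_b_rpow //.
  assert (H2 : rpow m ((p - 1) * (- r / al - 1)) = m * / rpow m E).
  { transitivity (rpow m 1 * / rpow m E); [| rewrite rpow_1 //].
    rewrite -rpow_opp -rpow_plus. apply rpow_eq. unfold E, expoE. field. lra. }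
  assert (H3 : rpow m ((p - 1) * (p / (p - 1) - 1)) = m).
  { rewrite -{2}(rpow_1 m) //. apply rpow_eq. field. lra. }
  rewrite H2 H3 rpow_bneg.
  field.
  repeat split; try apply Hnz_rpow; try lra.
Qed.

Lemma IVw : PF2 al r b p m k z c6 (U3 al r b l p m c6) (rpow (l * m) (p - 1))
          = PF1 al r b l p m k z c6 (rpow (l * m) (p - 1)).
Proof.
  unfold PF1, PF2, Fg, U1, U2, U3, U4, Bcoef, Acoef, Kc.
  set (E := expoE al r p).
  rewrite !rpow_rpow.
  rewrite ln_div_b; [|apply rpow_pos]. rewrite !ln_rpow !ln_b_rpow //.
  assert (H2 : rpow (l * m) ((p - 1) * (- r / al)) = rpow (l * m) p * / (rpow l E * rpow m E)).
  { rewrite -rpow_prod //. rewrite -rpow_opp -rpow_plus. apply rpow_eq. unfold E, expoE. field. lra. }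
  assert (H3 : rpow (l * m) ((p - 1) * (p / (p - 1))) = rpow (l * m) p).
  { apply rpow_eq. field. lra. }
  assert (H4 : rpow (l * m) (p - 1) = rpow (l * m) p * / (l * m)).
  { transitivity (rpow (l * m) p * / rpow (l * m) 1); [| rewrite rpow_1 //].
    rewrite -rpow_opp -rpow_plus. apply rpow_eq. ring. }
  rewrite H2 H3 H4 rpow_bneg.
  field.
  repeat split; try apply Hnz_rpow; try lra.
Qed.

Lemma IDw : PG2 al r b p m k z c6 (U3 al r b l p m c6) (rpow (l * m) (p - 1))
          = PG1 al r b l p m k z c6 (rpow (l * m) (p - 1)).
Proof.
  unfold PG1, PG2, Gg, U1, U2, U3, U4, Bcoef, Acoef, Kc.
  set (E := expoE al r p).
  rewrite !rpow_rpow.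
  rewrite ln_div_b; [|apply rpow_pos]. rewrite !ln_rpow !ln_b_rpow //.
  assert (H2 : rpow (l * m) ((p - 1) * (- r / al - 1)) = l * m * / (rpow l E * rpow m E)).
  { transitivity (rpow (l * m) 1 * / rpow (l * m) E); [| rewrite rpow_1 // rpow_prod //].
    rewrite -rpow_opp -rpow_plus. apply rpow_eq. unfold E, expoE. field. lra. }
  assert (H3 : rpow (l * m) ((p - 1) * (p / (p - 1) - 1)) = l * m).
  { rewrite -{2}(rpow_1 (l * m)) //. apply rpow_eq. field. lra. }
  rewrite H2 H3 rpow_bneg.
  field.
  repeat split; try apply Hnz_rpow; try lra.
Qed.

Lemma psi_deriv_b (kk : R) : kk <> 0 -> 1 - rpow b (1 - kk) / kk * (kk * rpow b (kk - 1)) = 0.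
Proof.
  intros Hkk. assert (rpow b (1 - kk) * rpow b (kk - 1) = 1).
  { rewrite -rpow_plus. replace (1 - kk + (kk - 1)) with 0 by ring. unfold rpow. apply Rpower_O; auto. }
  replace (rpow b (1 - kk) / kk * (kk * rpow b (kk - 1))) with (rpow b (1 - kk) * rpow b (kk - 1)) by (field; auto). rewrite H; ring.
Qed.

Lemma IG1 : PG1 al r b l p m k z c6 b = 0.
Proof.
  unfold PG1, Gg.
  rewrite psi_deriv_b //.
  unfold U1, U2. replace (b / b) with 1 by (field; lra). rewrite ln_1.
  rewrite (rpow_lin b (- r / al) (- r / al - 1) (- 1)); [|ring].
  rewrite rpow_opp rpow_1 // rpow_bneg.
  field. repeat split; try apply Hnz_rpow; try lra.
Qed.

Lemma IVul : PF3 al r b p m k z c6 (L5 al r b p m c6) (rpow m (p - 1))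
          = PF2 al r b p m k z c6 (L3 al r b p m c6) (rpow m (p - 1)).
Proof.
  unfold PF3, PF2, Fg, L5, L3, U4, Bcoef, Kc.
  set (E := expoE al r p).
  rewrite !rpow_rpow.
  rewrite ln_div_b; [|apply rpow_pos]. rewrite !ln_rpow !ln_b_rpow //.
  assert (H2 : rpow m ((p - 1) * (- r / al)) = rpow m p * / rpow m E).
  { rewrite -rpow_opp -rpow_plus. apply rpow_eq. unfold E, expoE. field. lra. }
  assert (H3 : rpow m ((p - 1) * (p / (p - 1))) = rpow m p).
  { apply rpow_eq. field. lra. }
  assert (H4 : rpow m (p - 1) = rpow m p * / m).
  { transitivity (rpow m p * / rpow m 1); [| rewrite rpow_1 //].
    rewrite -rpow_opp -rpow_plus. apply rpow_eq. ring. }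
  rewrite H2 H3 H4 rpow_bneg.
  field.
  repeat split; try apply Hnz_rpow; try lra.
Qed.

Lemma IG2l : PG2 al r b p m k z c6 (L3 al r b p m c6) b = 0.
Proof.
  unfold PG2, Gg.
  rewrite psi_deriv_b //.
  unfold L3, U4, Bcoef, Kc.
  rewrite (rpow_lin b (- r / al) (- r / al - 1) (- 1)); [|ring].
  rewrite (rpow_lin b (p / (p - 1)) (p / (p - 1) - 1) (- 1)); [|ring].
  rewrite !rpow_opp rpow_1 // rpow_bneg.
  field. repeat split; try apply Hnz_rpow; try lra.
Qed.
End Ids.

Section Pos.
Variables (al r b p m k z c6 : R).
Hypotheses (Hal : 0 < al) (Hr : 0 < r) (Hb : 0 < b) (Hm : 0 < m)
  (Hp1 : p < 1) (Hp0 : p <> 0) (HD : 0 < r * (1 - p) - al * p)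
  (Hk0 : 0 < k) (Hk1 : k <= 1) (Hz : 0 <= z) (Hc6 : 0 <= c6).

Lemma zterm_nonneg y : 0 < y ->
  0 <= z * (- (rpow b (1 - k) / k * (k * ((k - 1) * rpow y (k - 1 - 1))))).
Proof.
  intros Hy.
  replace (- (rpow b (1 - k) / k * (k * ((k - 1) * rpow y (k - 1 - 1)))))
    with ((1 - k) * (rpow b (1 - k) * rpow y (k - 1 - 1))) by (field; lra).
  apply Rmult_le_pos; auto. apply Rmult_le_pos; [lra|].
  apply Rmult_le_pos; apply Rlt_le, rpow_pos.
Qed.

Lemma expoE_neg : expoE al r p < 0.
Proof.
  unfold expoE. apply Rmult_lt_reg_r with al; auto. unfold Rdiv.
  rewrite Rmult_assoc Rinv_l; lra.
Qed.

Lemma A_nonneg l : 0 < l <= 1 -> 0 <= Acoef al r b l p m.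
Proof.
  intros Hl. unfold Acoef.
  assert (HE := expoE_neg).
  assert (1 <= rpow l (expoE al r p)).
  { unfold rpow, Rpower. eapply Rle_trans; [|apply exp_ineq1_le].
    assert (ln l <= 0) by (rewrite <- ln_1; apply ln_le; lra). nra. }
  apply Rmult_le_pos; [|apply Rlt_le, rpow_pos].
  apply Rmult_le_pos; [|lra].
  apply Rlt_le. apply Rmult_lt_0_compat.
  - apply Rmult_lt_0_compat; [nra|apply rpow_pos].
  - apply Rinv_0_lt_compat. apply Rmult_lt_0_compat; [nra|lra].
Qed.

Lemma e_prod_pos : 0 < (- r / al) * (- r / al - 1).
Proof.
  assert (0 < r / al) by (apply Rdiv_lt_0_compat; auto).
  replace (- r / al) with (- (r / al)) by (field; lra). nra.
Qed.

Lemma PH1_pos l y : 0 < l <= 1 -> 0 < y -> 0 < PH1 al r b l p m k z c6 y.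
Proof.
  intros Hl Hy. unfold PH1, Hg, U2.
  assert (HA := A_nonneg l Hl). assert (He := e_prod_pos).
  assert (Hz' := zterm_nonneg y Hy).
  assert (0 < l * m / (al + r) / y).
  { apply Rdiv_lt_0_compat; auto. apply Rdiv_lt_0_compat; [nra|lra]. }
  assert (0 <= rpow b (r / al) * (al / r * Acoef al r b l p m + c6)
                * ((- r / al) * ((- r / al - 1) * rpow y (- r / al - 1 - 1)))).
  { apply Rmult_le_pos.
    - apply Rmult_le_pos; [apply Rlt_le, rpow_pos|].
      apply Rplus_le_le_0_compat; auto. apply Rmult_le_pos; auto.
      apply Rlt_le, Rdiv_lt_0_compat; auto.
    - rewrite <- Rmult_assoc. apply Rmult_le_pos; [lra|apply Rlt_le, rpow_pos]. }
  lra.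
Qed.

Lemma PH3_pos y : 0 < y -> 0 < PH3 al r b p m k z c6 y.
Proof.
  intros Hy. unfold PH3, Hg.
  assert (He := e_prod_pos).
  assert (Hz' := zterm_nonneg y Hy).
  assert (0 < m / (al + r) / y).
  { apply Rdiv_lt_0_compat; auto. apply Rdiv_lt_0_compat; lra. }
  assert (0 <= rpow b (r / al) * c6
                * ((- r / al) * ((- r / al - 1) * rpow y (- r / al - 1 - 1)))).
  { apply Rmult_le_pos.
    - apply Rmult_le_pos; [apply Rlt_le, rpow_pos|auto].
    - rewrite <- Rmult_assoc. apply Rmult_le_pos; [lra|apply Rlt_le, rpow_pos]. }
  lra.
Qed.

Lemma PH2_pos y : rpow m (p - 1) <= y -> 0 < PH2 al r b p m k z c6 y.
Proof.
  intros Hy.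
  assert (Hy0 : 0 < y) by (eapply Rlt_le_trans; [apply rpow_pos|exact Hy]).
  unfold PH2, Hg, U4, Bcoef, Kc.
  set (E := expoE al r p).
  set (e := - r / al).
  set (q := p / (p - 1)).
  set (T := rpow y (e - 1 - 1)).
  assert (HT : 0 < T) by apply rpow_pos.
  assert (HY : rpow y (q - 1 - 1) = T * rpow y (q - e)).
  { unfold T. rewrite -rpow_plus. apply rpow_eq. ring. }
  assert (HqE : (p - 1) * (q - e) = E).
  { unfold q, e, E, expoE. field. lra. }
  assert (Hqe : 0 <= q - e).
  { assert (HE := expoE_neg). fold E in HE.
    assert (q - e = E / (p - 1)) by (rewrite <- HqE; field; lra).
    rewrite H. apply Rlt_le. apply Rdiv_neg_neg; lra. }
  assert (HYE : rpow m E <= rpow y (q - e)).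
  { rewrite <- HqE, <- rpow_rpow. unfold rpow. apply Rle_Rpower_l; auto.
    split; [apply rpow_pos|exact Hy]. }
  assert (Hbb : rpow b (- r / al) = / rpow b (r / al)).
  { rewrite <- rpow_opp. apply rpow_eq. field. lra. }
  rewrite HY Hbb.
  assert (He := e_prod_pos). fold e in He.
  assert (Hz' := zterm_nonneg y Hy0).
  assert (Key : rpow b (r / al) * (- (al / r) * (al ^ 2 * / rpow b (r / al)
        / ((al + r) ^ 2 * (r * (1 - p) - al * p)) * rpow m E) + c6) * (e * ((e - 1) * T)) +
      0 / y + (1 - p) ^ 3 / (p * (r * (1 - p) - al * p)) * (q * ((q - 1) * (T * rpow y (q - e))))
      = T * (rpow b (r / al) * c6 * (e * (e - 1))
             + ((1 - p) * rpow y (q - e) - al / (al + r) * rpow m E) / (r * (1 - p) - al * p))).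
  { unfold e, q. field. repeat split; try apply Hnz_rpow; lra. }
  rewrite Key.
  assert (0 < ((1 - p) * rpow y (q - e) - al / (al + r) * rpow m E) / (r * (1 - p) - al * p)).
  { apply Rdiv_lt_0_compat; auto.
    assert (Hf : al / (al + r) < 1 - p).
    { apply Rmult_lt_reg_r with (al + r); [lra|]. unfold Rdiv.
      rewrite Rmult_assoc Rinv_l; lra. }
    assert (0 < rpow m E) by apply rpow_pos. nra. }
  assert (0 <= rpow b (r / al) * c6 * (e * (e - 1))).
  { apply Rmult_le_pos; [apply Rmult_le_pos; [apply Rlt_le, rpow_pos|auto]|lra]. }
  assert (0 < T * (rpow b (r / al) * c6 * (e * (e - 1))
             + ((1 - p) * rpow y (q - e) - al / (al + r) * rpow m E) / (r * (1 - p) - al * p))).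
  { apply Rmult_lt_0_compat; lra. }
  lra.
Qed.
End Pos.

Section Cases.
Variables (al r b p m k z c6 : R).
Hypotheses (Hal : 0 < al) (Hr : 0 < r) (Hb : 0 < b) (Hm : 0 < m)
  (Hp1 : p < 1) (Hp0 : p <> 0) (HD : 0 < r * (1 - p) - al * p)
  (Hk0 : 0 < k) (Hk1 : k <= 1) (Hz : 0 <= z) (Hc6 : 0 <= c6).

Lemma upper_case l a :
  0 < l <= 1 -> 0 < a -> a <= rpow m (p - 1) ->
  rpow m (p - 1) <= rpow (l * m) (p - 1) -> rpow (l * m) (p - 1) <= b ->
  props (pw (rpow (l * m) (p - 1)) (PF1 al r b l p m k z c6)
          (pw (rpow m (p - 1)) (PF2 al r b p m k z c6 (U3 al r b l p m c6))
                               (PF3 al r b p m k z c6 (U5 al r b l p m c6)))) a b.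
Proof.
  intros Hl Ha Hau Huw Hwb.
  assert (Hk : k <> 0) by lra.
  assert (Hw0 : 0 < rpow (l * m) (p - 1)) by apply rpow_pos.
  apply pw3_props with (PG1 al r b l p m k z c6) (PG2 al r b p m k z c6 (U3 al r b l p m c6))
                       (PG3 al r b p m k z c6 (U5 al r b l p m c6)); auto.
  - intros y Hy. unfold PF1, PG1. apply Fg_derive; auto.
  - intros y Hy. unfold PF2, PG2. apply Fg_derive; auto.
  - intros y Hy. unfold PF3, PG3. apply Fg_derive; auto.
  - apply IVu; lra.
  - apply IDu; lra.
  - apply IVw; lra.
  - apply IDw; lra.
  - intros x y Hx Hxy Hy.
    apply (incr_deriv _ (PH3 al r b p m k z c6) x (rpow m (p - 1))); try lra.
    + intros t Ht. unfold PG3, PH3. apply Gg_derive; lra.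
    + intros t Ht. apply PH3_pos; lra.
  - intros x y Hx Hxy Hy.
    apply (incr_deriv _ (PH2 al r b p m k z c6) (rpow m (p - 1)) (rpow (l * m) (p - 1))); try lra.
    + intros t Ht. unfold PG2, PH2. apply Gg_derive; try lra.
    + intros t Ht. apply PH2_pos; lra.
  - intros x y Hx Hxy Hy.
    apply (incr_deriv _ (PH1 al r b l p m k z c6) (rpow (l * m) (p - 1)) b); try lra.
    + intros t Ht. unfold PG1, PH1. apply Gg_derive; lra.
    + intros t Ht. apply PH1_pos; lra.
  - rewrite IG1; lra.
Qed.

Lemma lower_case :
  rpow m (p - 1) <= b ->
  props (PF2 al r b p m k z c6 (L3 al r b p m c6)) (rpow m (p - 1)) b.
Proof.
  intros Hub.
  assert (Hk : k <> 0) by lra.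
  assert (Hu0 : 0 < rpow m (p - 1)) by apply rpow_pos.
  apply main_props with (PG2 al r b p m k z c6 (L3 al r b p m c6)); auto.
  - intros x Hx. apply continuity_pt_filterlim. apply: ex_derive_continuous.
    eexists. unfold PF2, PG2. apply Fg_derive; lra.
  - intros x Hx. unfold PF2, PG2. apply Fg_derive; lra.
  - intros x y Hx Hxy Hy.
    apply (incr_deriv _ (PH2 al r b p m k z c6) (rpow m (p - 1)) b); try lra.
    + intros t Ht. unfold PG2, PH2. apply Gg_derive; lra.
    + intros t Ht. apply PH2_pos; lra.
  - rewrite IG2l; lra.
Qed.
End Cases.

Local Open Scope R_scope.


Lemma ln_exp_div x b : 0 < b -> ln (exp x / b) = x - ln b.
Proof. intros Hb. unfold Rdiv. rewrite ln_mult ?ln_Rinv ?ln_exp; try ring; try apply exp_pos; try apply Rinv_0_lt_compat; auto. Qed.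
Lemma ln_b_exp x b : 0 < b -> ln (b * exp x) = ln b + x.
Proof. intros Hb. rewrite ln_mult ?ln_exp; try ring; try apply exp_pos; auto. Qed.

Lemma fb_at_u al r b l p m : 0 < al -> 0 < r -> 0 < b -> 0 < l -> 0 < m -> p < 1 -> p <> 0 ->
  fb_lhs al r b p m (rpow m (p - 1)) <= fb_rhs al r b l p m.
Proof.
  intros Hal Hr Hb Hl Hm Hp1 Hp0.
  set (t := rpow (rpow (l * m) (p - 1) / b) ((al + r) / al)).
  assert (Ht : 0 < t) by apply rpow_pos.
  assert (Hlt : ln t <= t - 1).
  { assert (H := exp_ineq1_le (ln t)). rewrite exp_ln in H; lra. }
  assert (Key : fb_rhs al r b l p m - fb_lhs al r b p m (rpow m (p - 1))
                = l * b * al / (al + r)^2 * (t - 1 - ln t)).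
  { unfold fb_rhs, fb_lhs, t, rpow, Rpower.
    rewrite ln_mult; try apply exp_pos; auto.
    rewrite !ln_exp_div // !ln_exp !ln_b_exp // ln_mult //.
    set (Lq := exp ((al + r) / al * ((p - 1) * ln l))).
    set (Mq := exp ((al + r) / al * ((p - 1) * ln m))).
    set (P1 := exp ((p - 1) * ln m)).
    set (Bs := exp (- r / al * ln b)).
    replace (exp ((al * p - (1 - p) * r) / al * ln l)) with (l * Lq)
      by (transitivity (exp (ln l) * Lq); [rewrite exp_ln //| unfold Lq; rewrite -exp_plus; f_equal; field; lra]).
    replace (exp (- ((al + r) * (1 - p)) / al * ln m)) with Mq
      by (unfold Mq; f_equal; field; lra).
    replace (exp (r / al * ((p - 1) * ln m))) with (Mq / P1)
      by (unfold Mq, P1; unfold Rdiv at 1; rewrite -exp_Ropp -exp_plus; f_equal; field; lra).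
    replace (exp ((al + r) / al * ((p - 1) * (ln l + ln m) - ln b))) with (Lq * Mq * Bs / b)
      by (transitivity (Lq * Mq * Bs * exp (- ln b));
          [rewrite exp_Ropp exp_ln //| unfold Lq, Mq, Bs; rewrite -!exp_plus; f_equal; field; lra]).
    assert (0 < P1) by apply exp_pos.
    field. repeat split; try lra. }
  assert (0 <= l * b * al / (al + r)^2 * (t - 1 - ln t)).
  { apply Rmult_le_pos; [|lra]. apply Rlt_le. apply Rdiv_lt_0_compat; [|nra].
    apply Rmult_lt_0_compat; [|lra]. nra. }
  lra.
Qed.

Lemma fb_small al r b l p m : 0 < al -> 0 < r -> 0 < b -> 0 < m ->
  exists y0, 0 < y0 < rpow m (p - 1) /\ fb_rhs al r b l p m < fb_lhs al r b p m y0.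
Proof.
  intros Hal Hr Hb Hm.
  set (u := rpow m (p - 1)). assert (Hu : 0 < u) by apply rpow_pos.
  set (R0 := fb_rhs al r b l p m).
  set (Bs := rpow b (- r / al)). assert (HBs : 0 < Bs) by apply rpow_pos.
  set (c4 := u / (al + r) * Bs * rpow u (r / al)).
  assert (Hc4 : 0 < c4).
  { unfold c4. apply Rmult_lt_0_compat; [|apply rpow_pos].
    apply Rmult_lt_0_compat; auto. apply Rdiv_lt_0_compat; lra. }
  set (M0 := (al + r) * (R0 + c4) + b * ln b).
  set (v := 1 + (3 + Rabs M0 / b) / u).
  assert (HM0 : 0 <= Rabs M0 / b) by (apply Rdiv_le_0_compat; [apply Rabs_pos|auto]).
  assert (Hv1 : 1 <= v).
  { unfold v. assert (0 <= (3 + Rabs M0 / b) / u) by (apply Rdiv_le_0_compat; lra). lra. }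
  assert (Huv : u * v = u + (3 + Rabs M0 / b)).
  { unfold v. field. lra. }
  set (y0 := / (v * v)).
  assert (Hy0 : 0 < y0) by (apply Rinv_0_lt_compat; nra).
  assert (Hy0u : y0 < u).
  { unfold y0. apply Rmult_lt_reg_r with (v * v); [nra|].
    rewrite Rinv_l; [|nra]. nra. }
  exists y0. split; [lra|].
  unfold fb_lhs. fold u. fold Bs.
  assert (T1 : b * u / ((al + r) * y0) = b * u * (v * v) / (al + r)).
  { unfold y0. field. split; nra. }
  assert (Hlnv : ln v <= v - 1).
  { assert (H := exp_ineq1_le (ln v)). rewrite exp_ln in H; lra. }
  assert (T2 : ln (y0 / b) = - 2 * ln v - ln b).
  { unfold y0. unfold Rdiv. rewrite ln_mult ?ln_Rinv ?ln_mult; try nra; try ring;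
    try apply Rinv_0_lt_compat; try nra. }
  assert (T3 : 0 <= r / (al + r) ^ 2 * Bs * rpow y0 ((al + r) / al)).
  { apply Rmult_le_pos; [|apply Rlt_le, rpow_pos].
    apply Rmult_le_pos; [|lra]. apply Rlt_le, Rdiv_lt_0_compat; nra. }
  assert (T4 : u / (al + r) * Bs * rpow y0 (r / al) <= c4).
  { unfold c4. apply Rmult_le_compat_l.
    - apply Rmult_le_pos; [|lra]. apply Rlt_le, Rdiv_lt_0_compat; lra.
    - unfold rpow. apply Rle_Rpower_l; [apply Rlt_le, Rdiv_lt_0_compat; lra|lra]. }
  rewrite T1 T2.
  assert (Key : b * v * (u * v - 2) > M0).
  { rewrite Huv. assert (M0 <= Rabs M0) by apply Rle_abs.
    assert (b * (Rabs M0 / b) = Rabs M0) by (field; lra).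
    assert (b * v * (u + (3 + Rabs M0 / b) - 2) >= b * (1 + Rabs M0 / b)).
    { assert (E1 : b * v * (u + (3 + Rabs M0 / b) - 2) - b * (1 + Rabs M0 / b)
                = b * (v - 1) * (u + (3 + Rabs M0 / b) - 2) + b * u) by ring.
      assert (0 <= b * (v - 1) * (u + (3 + Rabs M0 / b) - 2)).
      { apply Rmult_le_pos; [apply Rmult_le_pos|]; lra. }
      assert (0 <= b * u) by nra. lra. }
    nra. }
  assert (Hfin : (al + r) * R0 < b * u * (v * v) + b * (- 2 * ln v - ln b) - (al + r) * c4).
  { unfold M0 in Key. nra. }
  apply Rmult_lt_reg_l with (al + r); [lra|].
  assert (E : (al + r) * (b * u * (v * v) / (al + r) + b / (al + r) * (- 2 * ln v - ln b)
      + r / (al + r) ^ 2 * Bs * rpow y0 ((al + r) / al) - u / (al + r) * Bs * rpow y0 (r / al))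
      = b * u * (v * v) + b * (- 2 * ln v - ln b) + (al + r) * (r / (al + r) ^ 2 * Bs * rpow y0 ((al + r) / al))
        - (al + r) * (u / (al + r) * Bs * rpow y0 (r / al))).
  { field. lra. }
  rewrite E. nra.
Qed.

Lemma fb_exists al r b l p m : 0 < al -> 0 < r -> 0 < b -> 0 < l -> 0 < m -> p < 1 -> p <> 0 ->
  exists y, (0 < y <= rpow m (p - 1)) /\ fb_lhs al r b p m y = fb_rhs al r b l p m.
Proof.
  intros Hal Hr Hb Hl Hm Hp1 Hp0.
  destruct (fb_small al r b l p m Hal Hr Hb Hm) as [y0 [[Hy0 Hy0u] Hlt]].
  assert (Hu := fb_at_u al r b l p m Hal Hr Hb Hl Hm Hp1 Hp0).
  destruct (Req_dec (fb_lhs al r b p m (rpow m (p - 1))) (fb_rhs al r b l p m)) as [He|Hne].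
  { exists (rpow m (p - 1)). split; [split; [apply rpow_pos|lra]|exact He]. }
  set (G := fun y => fb_rhs al r b l p m - fb_lhs al r b p m y).
  destruct (IVT_interv G y0 (rpow m (p - 1))) as [y [Hy HG]].
  - intros x Hx. apply continuity_pt_filterlim; apply: ex_derive_continuous.
    unfold G, fb_lhs, rpow. auto_derive.
    assert (0 < x) by lra.
    repeat split; try apply ex_derive_Rpower; try lra.
    all: try (apply Rmult_lt_0_compat; [lra|apply Rinv_0_lt_compat; lra]).
    all: try (intros Hc; nra).
  - exact Hy0u.
  - unfold G; lra.
  - unfold G; lra.
  - exists y. split; [lra|]. unfold G in HG. lra.
Qed.

Lemma ystar_spec al r b l p m : 0 < al -> 0 < r -> 0 < b -> 0 < m -> p < 1 -> p <> 0 ->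
  0 < ystar al r b l p m <= rpow m (p - 1).
Proof.
  intros Hal Hr Hb Hm Hp1 Hp0. unfold ystar.
  destruct (upper_region_dec b l p m) as [HU|HL]; simpl.
  - destruct HU as [Hl _]. destruct (fb_exists al r b l p m Hal Hr Hb Hl Hm Hp1 Hp0) as [y Hy].
    assert (H := epsilon_spec (inhabits 0) (fun y => 0 < y <= rpow m (p - 1)
                     /\ fb_lhs al r b p m y = fb_rhs al r b l p m) (ex_intro _ y Hy)).
    simpl in H. apply H.
  - split; [apply rpow_pos|lra].
Qed.

Lemma integrand_nonneg al r b ell y p : 0 < al -> 0 < r -> 0 < b -> 0 < y -> y <= rpow ell (p - 1) ->
  0 <= al / (r * (al + r)) * rpow ell (p - 1) * rpow b (- r / al) * rpow y (r / al)
       - al * b / (al + r)^2 * rpow b (- (al + r) / al) * rpow y ((al + r) / al).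
Proof.
  intros Hal Hr Hb Hy Hyl.
  assert (E1 : rpow b (- (al + r) / al) = rpow b (- r / al) * / b).
  { transitivity (rpow b (- r / al) * / rpow b 1); [|rewrite rpow_1 //].
    rewrite -rpow_opp -rpow_plus. apply rpow_eq. field. lra. }
  assert (E2 : rpow y ((al + r) / al) = y * rpow y (r / al)).
  { transitivity (rpow y 1 * rpow y (r / al)); [|rewrite rpow_1 //].
    rewrite -rpow_plus. apply rpow_eq. field. lra. }
  rewrite E1 E2.
  set (Bs := rpow b (- r / al)). set (Ys := rpow y (r / al)).
  assert (0 < Bs) by apply rpow_pos. assert (0 < Ys) by apply rpow_pos.
  replace (al / (r * (al + r)) * rpow ell (p - 1) * Bs * Ys -
           al * b / (al + r) ^ 2 * (Bs * / b) * (y * Ys))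
    with (al * Bs * Ys / (al + r) * (rpow ell (p - 1) / r - y / (al + r))) by (field; lra).
  apply Rmult_le_pos.
  - apply Rlt_le, Rdiv_lt_0_compat; [|lra]. apply Rmult_lt_0_compat; [|auto]. nra.
  - assert (y / (al + r) <= y / r).
    { unfold Rdiv. apply Rmult_le_compat_l; [lra|]. apply Rinv_le_contravar; lra. }
    assert (y / r <= rpow ell (p - 1) / r).
    { unfold Rdiv. apply Rmult_le_compat_r; [apply Rlt_le, Rinv_0_lt_compat|]; lra. }
    lra.
Qed.

Lemma lub_all : forall l, is_lub_Rbar (fun _ : R => True) l -> l = p_infty.
Proof.
  intros l [Hub _]. destruct l as [x| |].
  - exfalso. specialize (Hub (x + 1) I). simpl in Hub. lra.
  - reflexivity.
  - exfalso. specialize (Hub 0 I). simpl in Hub. exact Hub.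
Qed.

Lemma RInt_gen_nonneg (F : R -> R) (m : R) :
  (forall x, m <= x -> 0 <= F x) ->
  0 <= RInt_gen F (at_point m) (Rbar_locally p_infty).
Proof.
  intros HF.
  destruct (classic (exists l, is_RInt_gen F (at_point m) (Rbar_locally p_infty) l)) as [[l Hl]|Hn].
  - rewrite (is_RInt_gen_unique F l Hl).
    assert (H0 := is_RInt_gen_scal F 0 l Hl).
    assert (norm (scal 0 l) <= l).
    { apply (RInt_gen_norm (Fa := at_point m) (Fb := Rbar_locally p_infty) (fun y => scal 0 (F y)) F); auto.
      - apply Filter_prod with (fun x => x = m) (fun x => m < x);
          [reflexivity|exists m; auto|]. intros x y -> Hy. simpl. lra.
      - apply Filter_prod with (fun x => x = m) (fun x => m < x);
          [reflexivity|exists m; auto|]. intros x y -> Hy t Ht. simpl in Ht.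
        rewrite /scal /= /mult /= Rmult_0_l /norm /= /abs /= Rabs_R0. apply HF; lra. }
    assert (0 <= norm (scal 0 l)) by apply norm_ge_0. lra.
  - unfold RInt_gen, Hierarchy.iota.
    assert (Hset : forall A : R -> Prop, (forall x, is_RInt_gen F (at_point m) (Rbar_locally p_infty) x -> A x)).
    { intros A x Hx. exfalso. apply Hn. exists x. exact Hx. }
    unfold lim. simpl. unfold R_complete_lim.
    assert (H := Lub_Rbar_correct (fun x : R => forall x0 : R,
        is_RInt_gen F (at_point m) (Rbar_locally p_infty) x0 -> ball (x + 1) {| pos := 1; cond_pos := Rlt_0_1 |} x0)).
    set (L := Lub_Rbar _) in *.
    assert (L = p_infty).
    { apply lub_all. split.
      - intros x _. apply H. intros x0 Hx0. apply Hset; auto.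
      - intros b Hb. apply H. intros x Hx. apply Hb. exact I. }
    rewrite H0. simpl. lra.
Qed.

Lemma C6_nonneg al r b l p m : 0 < al -> 0 < r -> 0 < b -> 0 < m -> p < 1 -> p <> 0 ->
  0 <= C6 al r b l p m.
Proof.
  intros Hal Hr Hb Hm Hp1 Hp0. unfold C6.
  apply RInt_gen_nonneg. intros x Hx.
  destruct (ystar_spec al r b l p x Hal Hr Hb ltac:(lra) Hp1 Hp0) as [H1 H2].
  apply integrand_nonneg; auto.
Qed.

Lemma kappa_bounds al eta rho muZ : 0 < al -> muZ < rho -> eta <= muZ ->
  0 < kappaC al eta rho muZ <= 1.
Proof.
  intros Hal Hmu Heta. unfold kappaC.
  set (bb := rho - eta - al).
  set (X := bb ^ 2 + 4 * al * (rho - muZ)).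
  assert (HX : 0 <= X) by (unfold X; nra).
  set (S := sqrt X).
  assert (HS0 : 0 <= S) by apply sqrt_pos.
  assert (HS2 : S * S = X) by apply sqrt_sqrt, HX.
  assert (HSb : bb < S).
  { destruct (Rlt_or_le bb 0); [lra|]. unfold X in HS2. nra. }
  assert (HSu : S <= 2 * al + bb).
  { assert (0 < 2 * al + bb) by (unfold bb; lra).
    assert (X <= (2 * al + bb) * (2 * al + bb)) by (unfold X, bb; nra).
    nra. }
  split.
  - apply Rdiv_lt_0_compat; lra.
  - apply Rmult_le_reg_r with (2 * al); [lra|]. unfold Rdiv.
    rewrite Rmult_assoc Rinv_l; lra.
Qed.

Lemma rho0_facts al muZ p rho : 0 < al -> p < 1 -> p <> 0 -> rho0C al muZ p < rho ->
  muZ < rho /\ 0 < rho * (1 - p) - al * p.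
Proof.
  intros Hal Hp1 Hp0 H. unfold rho0C in H.
  destruct (Rlt_dec 0 p) as [Hp|Hp].
  - assert (muZ < rho) by (eapply Rle_lt_trans; [apply Rmax_l|exact H]).
    assert (Hm2 : Rmax (2 * al) (al * p / (1 - p)) < rho) by (eapply Rle_lt_trans; [apply Rmax_r|exact H]).
    assert (al * p / (1 - p) < rho) by (eapply Rle_lt_trans; [apply Rmax_r|exact Hm2]).
    split; auto.
    assert (al * p = al * p / (1 - p) * (1 - p)) by (field; lra).
    nra.
  - assert (muZ < rho) by (eapply Rle_lt_trans; [apply Rmax_l|exact H]).
    assert (0 < rho) by (eapply Rle_lt_trans; [apply Rmax_r|exact H]).
    split; auto. assert (p < 0) by lra. nra.
Qed.

Local Open Scope R_scope.


Lemma rpow_decr x y e : 0 < x <= y -> e <= 0 -> rpow y e <= rpow x e.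
Proof.
  intros Hxy He.
  assert (Ex : forall t, rpow t e = / rpow t (- e)).
  { intros t. rewrite -rpow_opp Ropp_involutive //. }
  rewrite !Ex. apply Rinv_le_contravar; [apply rpow_pos|].
  unfold rpow. apply Rle_Rpower_l; lra.
Qed.

Lemma rpow_decr_strict x y e : 0 < x < y -> e < 0 -> rpow y e < rpow x e.
Proof.
  intros Hxy He.
  assert (Ex : forall t, rpow t e = / rpow t (- e)).
  { intros t. rewrite -rpow_opp Ropp_involutive //. }
  rewrite !Ex. apply Rinv_lt_contravar; [apply Rmult_lt_0_compat; apply rpow_pos|].
  unfold rpow. apply Rlt_Rpower_l; lra.
Qed.

Lemma rpow_inv_exp b p : 0 < b -> p < 1 -> rpow (rpow b (1 / (p - 1))) (p - 1) = b.
Proof.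
  intros Hb Hp. rewrite rpow_rpow. replace (1 / (p - 1) * (p - 1)) with 1 by (field; lra).
  apply rpow_1; auto.
Qed.

Theorem lemma3p2 (d : nat) (mu : 'cV[R]_d) (sigma : 'M[R]_d) (muZ sigmaZ : R)
  (gamma : 'cV[R]_d) (rho beta lam p : R) :
  sigma \in unitmx ->
  mu != 0%R ->
  0 <= sigmaZ ->
  norm2 gamma = 1 ->
  0 < rho -> 0 < beta -> 0 <= lam <= 1 -> p < 1 -> p <> 0 ->
  let alpha := alphaC mu sigma in
  let eta := etaC mu sigma sigmaZ gamma in
  let kappa := kappaC alpha eta rho muZ in
  eta <= muZ ->
  rho0C alpha muZ p < rho ->
  forall z m : R, 0 <= z -> rpow beta (1 / (p - 1)) <= m ->
    let f := fun y => vhat alpha rho beta lam p kappa y z m in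
    let a := ystar alpha rho beta lam p m in
    continuous_on_Icc f a beta /\ strictly_convex_on_Icc f a beta
    /\ decreasing_on_Icc f a beta.
Proof.
  intros Hs Hmu HsZ Hg Hr Hb Hlam Hp1 Hp0 alpha eta kappa Heta Hrho z m Hz Hm f a.
  assert (Hal : 0 < alpha) by (apply alpha_pos; auto).
  destruct (rho0_facts alpha muZ p rho Hal Hp1 Hp0 Hrho) as [HmuZ HD].
  destruct (kappa_bounds alpha eta rho muZ Hal HmuZ Heta) as [Hk0 Hk1].
  assert (HB1 : 0 < rpow beta (1 / (p - 1))) by apply rpow_pos.
  assert (Hm0 : 0 < m) by lra.
  assert (Hc6 : 0 <= C6 alpha rho beta lam p m) by (apply C6_nonneg; auto).
  assert (Hub : rpow m (p - 1) <= beta).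
  { apply Rle_trans with (rpow (rpow beta (1 / (p - 1))) (p - 1)); [apply rpow_decr; lra|].
    rewrite rpow_inv_exp //; lra. }
  assert (Ha := ystar_spec alpha rho beta lam p m Hal Hr Hb Hm0 Hp1 Hp0). fold a in Ha.
  change (props f a beta).
  destruct (upper_region_dec beta lam p m) as [HU|HL].
  - destruct HU as [Hl Hlm].
    assert (Hlm' : rpow beta (1 / (p - 1)) <= lam * m).
    { apply Rmult_le_reg_l with (/ lam); [apply Rinv_0_lt_compat; lra|].
      rewrite -Rmult_assoc Rinv_l; lra. }
    assert (Hwb : rpow (lam * m) (p - 1) <= beta).
    { apply Rle_trans with (rpow (rpow beta (1 / (p - 1))) (p - 1)); [apply rpow_decr; lra|].
    rewrite rpow_inv_exp //; lra. }
    assert (Huw : rpow m (p - 1) <= rpow (lam * m) (p - 1)).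
    { apply rpow_decr; [split; [nra|nra]|lra]. }
    apply props_ext with (pw (rpow (lam * m) (p - 1)) (PF1 alpha rho beta lam p m kappa z (C6 alpha rho beta lam p m))
          (pw (rpow m (p - 1)) (PF2 alpha rho beta p m kappa z (C6 alpha rho beta lam p m) (U3 alpha rho beta lam p m (C6 alpha rho beta lam p m)))
                               (PF3 alpha rho beta p m kappa z (C6 alpha rho beta lam p m) (U5 alpha rho beta lam p m (C6 alpha rho beta lam p m))))).
    + intros y _. unfold f, vhat. destruct (Rlt_dec 0 lam) as [Hl0|Hn]; [|lra]. simpl.
      unfold Defs.C1, Defs.C2, Defs.C3, Defs.C4, Defs.C5.
      destruct (upper_region_dec beta lam p m) as [HU2|Hn]; [|exfalso; apply Hn; split; auto]. simpl.
      unfold pw, PF1, PF2, PF3, Fg, U1, U2, U3, U4, U5, Kc.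
      destruct (Rlt_dec (rpow (lam * m) (p - 1)) y) as [Hw1|Hw1]; simpl; [ring|].
      destruct (Rlt_dec (rpow m (p - 1)) y) as [Hu1|Hu1]; simpl; ring.
    + apply upper_case; auto; lra.
  - assert (Hae : a = rpow m (p - 1)).
    { unfold a, ystar. destruct (upper_region_dec beta lam p m) as [H|HL2]; [contradiction|reflexivity]. }
    rewrite Hae.
    apply props_ext with (PF2 alpha rho beta p m kappa z (C6 alpha rho beta lam p m) (L3 alpha rho beta p m (C6 alpha rho beta lam p m))).
    + intros y [Hy1 Hy2].
      assert (Branch3 : ~ rpow m (p - 1) < y ->
        C5 alpha rho beta lam p m / beta * y +
        rpow beta (rho / alpha) * C6 alpha rho beta lam p m * rpow y (- rho / alpha) +
        rpow m p / (p * rho) + m / (alpha + rho) * y * ln (y / beta) + z * psiC beta kappa y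
        = PF2 alpha rho beta p m kappa z (C6 alpha rho beta lam p m) (L3 alpha rho beta p m (C6 alpha rho beta lam p m)) y).
      { intros Hn. assert (y = rpow m (p - 1)) by lra. subst y.
        rewrite -(IVul alpha rho beta p m kappa z (C6 alpha rho beta lam p m)); try lra.
        unfold Defs.C5. destruct (upper_region_dec beta lam p m) as [H|HL2]; [contradiction|]. simpl.
        unfold PF3, Fg, L5, L3. simpl. ring. }
      assert (Branch2 : rpow m (p - 1) < y ->
        C3 alpha rho beta lam p m / beta * y +
        rpow beta (rho / alpha) * C4 alpha rho beta lam p m * rpow y (- rho / alpha) +
        (1 - p) ^ 3 / (p * (rho * (1 - p) - alpha * p)) * rpow y (p / (p - 1)) + z * psiC beta kappa y
        = PF2 alpha rho beta p m kappa z (C6 alpha rho beta lam p m) (L3 alpha rho beta p m (C6 alpha rho beta lam p m)) y).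
      { intros _. unfold Defs.C3, Defs.C4. destruct (upper_region_dec beta lam p m) as [H|HL2]; [contradiction|]. simpl.
        unfold PF2, Fg, L3, U4, Kc. simpl. ring. }
      unfold f, vhat.
      destruct (Rlt_dec 0 lam) as [Hl|Hl]; simpl.
      * assert (Hw : beta < rpow (lam * m) (p - 1)).
        { assert (lam * m < rpow beta (1 / (p - 1))).
          { destruct (Rlt_or_le (lam * m) (rpow beta (1 / (p - 1)))) as [H|H]; auto.
            exfalso. apply HL. split; auto.
            apply Rmult_le_reg_l with lam; auto. rewrite -Rmult_assoc Rinv_r; lra. }
          apply Rle_lt_trans with (rpow (rpow beta (1 / (p - 1))) (p - 1)); [rewrite rpow_inv_exp //; lra|].
          apply rpow_decr_strict; [split; nra|lra]. }
        destruct (Rlt_dec (rpow (lam * m) (p - 1)) y); [lra|]. simpl.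
        destruct (Rlt_dec (rpow m (p - 1)) y); simpl; auto.
      * destruct (Rlt_dec (rpow m (p - 1)) y); simpl; auto.
    + apply lower_case; auto; lra.
Qed.

Local Open Scope R_scope.
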